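(* Let \(\mathbf{m}_i =\left(\langle x_0^{(k)}\, x_1^{(\ell)}\rangle_i\;|\;(k,\ell) \in \mathcal{E}\right)\) be a message encoding vector with unnormalized associated message encoding state \[\sigma_{\mathbf{m}_i}=\sum_{k<\ell}|B_{\langle x_0^{(k)} x_1^{(\ell)}\rangle_i}\rangle\langle B_{\langle x_0^{(k)} x_1^{(\ell)}\rangle_i}|_{k,\ell}\otimes \mathds{1}_{[N]\backslash {\{k,\ell\}}}.\] Then the largest eigenvalue satisfies \[\lambda_{\textup{max}}(\sigma_{\mathbf{m}_{i}})\leq \frac{N^2}{4} +\frac{N}{4}-\frac{1}{2}.\]
   Context: Consider an \(N\)-qubit register with sites indexed by \([N]=\{1,\dots,N\}\). The index-encoding set is \(\mathcal{E}=\{(k,\ell): k,\ell\in[N],\ k<\ell\}\), so \(|\mathcal{E}|=N(N-1)/2\). Messages are \(x=x_0x_1\in X=\{00,01,10,11\}\). A message encoding vector \(\mathbf{m}_i\in X^{\mathcal{E}}\) assigns to each pair \((k,\ell)\in\mathcal{E}\) a two-bit message, denoted \(\langle x_0^{(k)} x_1^{(\ell)}\rangle_i\). The two-qubit Bell states are \(|B_{xy}\rangle=\frac{1}{\sqrt{2}}(|0y\rangle+(-1)^x|1\bar y\rangle)\) for \(x,y\in\{0,1\}\), with \(\bar y\) the negation of \(y\). In the sum, \(|B\rangle\langle B|_{k,\ell}\) acts on qubits \(k\) and \(\ell\), and \(\mathds{1}_{[N]\backslash\{k,\ell\}}\) is the identity on all remaining qubits of the register. *)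

(* Defs.v *)
From HB Require Import structures.
From mathcomp Require Import all_boot all_order all_algebra all_field.
Set Implicit Arguments. Unset Strict Implicit. Unset Printing Implicit Defensive.
Import Order.TTheory GRing.Theory Num.Theory.
Local Open Scope ring_scope.

(* Computational basis of N qubits: index i : 'I_(2^N); qubit j (0-based,
   site j+1 of the paper) of basis state i is the j-th binary digit of i. *)
Definition qbit (N : nat) (i : 'I_(2 ^ N)) (j : 'I_N) : bool := odd (i %/ 2 ^ j).

(* Two-qubit basis |a b> (a on the first qubit, b on the second) as index in 'I_4. *)
Definition idx2 (a b : bool) : 'I_4 := inord (2 * a + b).

Definition bell (x y : bool) : 'cV[algC]_4 :=
  \col_(r < 4)
    ((if r == idx2 false y then 1
      else if r == idx2 true (~~ y) then (-1) ^+ x else 0) / sqrtC 2%:R).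

Definition bellproj (x y : bool) : 'M[algC]_4 :=
  bell x y *m map_mx Num.conj ((bell x y)^T).

(* Message encoding vector: assigns a two-bit message (x0, x1) to every pair
   (k, l) with k < l; values at pairs with k >= l are irrelevant. *)
Definition msg_vec (N : nat) := 'I_N -> 'I_N -> bool * bool.

(* |B><B|_{k,l} (x) 1_{[N] \ {k,l}} acting on the 2^N-dimensional register. *)
Definition pair_op (N : nat) (P : 'M[algC]_4) (k l : 'I_N) : 'M[algC]_(2 ^ N) :=
  \matrix_(i, j)
    ((if [forall q : 'I_N, (q != k) && (q != l) ==> (qbit i q == qbit j q)]
      then 1 else 0)
     * P (idx2 (qbit i k) (qbit i l)) (idx2 (qbit j k) (qbit j l))).

Definition sigma_m (N : nat) (m : msg_vec N) : 'M[algC]_(2 ^ N) :=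
  \sum_(k < N) \sum_(l < N | (k < l)%N)
     pair_op (bellproj (m k l).1 (m k l).2) k l.

(* Main.v *)
Require Import Defs.
From HB Require Import structures.
From mathcomp Require Import all_boot all_order all_algebra all_field.
Import Order.TTheory GRing.Theory Num.Theory.
Local Open Scope ring_scope.

From mathcomp Require Import ring.


Lemma bits_nat (N i j : nat) : (i < 2 ^ N)%N -> (j < 2 ^ N)%N ->
  (forall q, (q < N)%N -> odd (i %/ 2 ^ q) = odd (j %/ 2 ^ q)) -> i = j.
Proof.
elim: N i j => [|N IH] i j hi hj hq.
  by move: hi hj; rewrite expn0 !ltnS !leqn0 => /eqP -> /eqP ->.
have h0 := hq 0%N isT; rewrite expn0 !divn1 in h0.
have h2 : i./2 = j./2.
  apply: IH.
  - by rewrite -divn2 ltn_divLR // -expnSr.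
  - by rewrite -divn2 ltn_divLR // -expnSr.
  move=> q hqN; rewrite -!divn2 -!divnMA -expnS; exact: hq.
by rewrite -[i]odd_double_half -[j]odd_double_half h0 h2.
Qed.

Lemma bits_inj N (i j : 'I_(2 ^ N)) : (forall q, qbit i q = qbit j q) -> i = j.
Proof.
move=> h; apply: val_inj => /=.
have := @bits_nat N i j (ltn_ord i) (ltn_ord j); apply => q hq.
exact: (h (Ordinal hq)).
Qed.

Lemma amgm (a b x y : algC) : x \is Num.real -> y \is Num.real ->
  a \is Num.real -> b \is Num.real ->
  2%:R * (a * b) * (x * y) <= b ^+ 2 * x ^+ 2 + a ^+ 2 * y ^+ 2.
Proof.
move=> rx ry ra rb.
have rz : (b * x - a * y) \is Num.real by rewrite rpredB // rpredM.
have h : 0 <= (b * x - a * y) ^+ 2 by rewrite -realEsqr.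
rewrite -subr_ge0.
suff -> : b ^+ 2 * x ^+ 2 + a ^+ 2 * y ^+ 2 - 2%:R * (a * b) * (x * y) = (b * x - a * y) ^+ 2 by [].
ring.
Qed.


Definition bsupp (y : bool) (r : 'I_4) : bool :=
  (r == idx2 false y) || (r == idx2 true (~~ y)).

Lemma bsupp_idx2 y a b : bsupp y (idx2 a b) = ~~ (a (+) b (+) y).
Proof.
rewrite /bsupp /idx2 -!val_eqE /= !inordK;
  by case: a; case: b; case: y.
Qed.

Definition bellc (x y : bool) (r : 'I_4) : algC :=
  (if r == idx2 false y then 1
      else if r == idx2 true (~~ y) then (-1) ^+ x else 0) / sqrtC 2%:R.

Lemma sqrt2_gt0 : 0 < sqrtC (2%:R : algC).
Proof. by rewrite sqrtC_gt0 ltr0n. Qed.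

Lemma norm_bellc x y r : `|bellc x y r| = (bsupp y r)%:R / sqrtC 2%:R.
Proof.
rewrite /bellc normrM normfV (gtr0_norm sqrt2_gt0) /bsupp.
case: (r == idx2 false y) => /=; first by rewrite normr1.
case: (r == idx2 true (~~ y)) => /=; last by rewrite normr0.
by rewrite normrX normrN1 expr1n.
Qed.

Lemma conj_bellc x y r : (bellc x y r)^* = bellc x y r.
Proof.
apply: conj_Creal; rewrite /bellc rpredM //; last first.
  by rewrite rpredV ger0_real // sqrtC_ge0 ler0n.
case: ifP => _; first exact: rpred1.
case: ifP => _; last exact: rpred0.
by rewrite rpredX // rpredN rpred1.
Qed.

Lemma bellprojE x y r c : bellproj x y r c = bellc x y r * bellc x y c.
Proof.
rewrite /bellproj mxE big_ord1 !mxE.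
have := conj_bellc x y c; rewrite /bellc => ->.
by [].
Qed.

Lemma norm_bellproj x y r c :
  `|bellproj x y r c| = (bsupp y r && bsupp y c)%:R / 2%:R.
Proof.
rewrite bellprojE normrM !norm_bellc -mulnb natrM.
rewrite mulrACA -invfM -expr2 sqrtCK.
by [].
Qed.

Lemma bellproj_sym x y r c : bellproj x y c r = (bellproj x y r c)^*.
Proof. by rewrite !bellprojE rmorphM /= !conj_bellc mulrC. Qed.

Set Implicit Arguments. Unset Strict Implicit.

Definition agr N (k l : 'I_N) (i j : 'I_(2 ^ N)) : bool :=
  [forall q : 'I_N, (q != k) && (q != l) ==> (qbit i q == qbit j q)].
Definition ym N (m : msg_vec N) (k l : 'I_N) : bool :=
  if (k < l)%N then (m k l).2 else (m l k).2.
Definition Tb N (m : msg_vec N) (k l : 'I_N) (i : 'I_(2 ^ N)) : bool :=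
  ~~ (qbit i k (+) qbit i l (+) ym m k l).
Definition Mx N (m : msg_vec N) (k l : 'I_N) (i j : 'I_(2 ^ N)) : algC :=
  (agr k l i j && Tb m k l i && Tb m k l j)%:R.
Definition dk N (m : msg_vec N) (k : 'I_N) (i : 'I_(2 ^ N)) : nat :=
  \sum_(l < N | l != k) Tb m k l i.

Lemma agr_sym N (k l : 'I_N) i j : agr k l i j = agr k l j i.
Proof.
rewrite /agr; apply: eq_forallb => q.
by rewrite [qbit j q == _]eq_sym.
Qed.

Lemma agr_symkl N (k l : 'I_N) i j : agr k l i j = agr l k i j.
Proof.
rewrite /agr; apply: eq_forallb => q.
by rewrite andbC.
Qed.

Lemma agr_refl N (k l : 'I_N) i : agr k l i i.
Proof. by apply/forallP => q; rewrite eqxx implybT. Qed.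

Lemma agr_trans N (k l : 'I_N) i j h : agr k l i j -> agr k l i h -> agr k l j h.
Proof.
move=> /forallP h1 /forallP h2; apply/forallP => q.
apply/implyP => hq; have := implyP (h1 q) hq; have := implyP (h2 q) hq.
by move=> /eqP <- /eqP ->.
Qed.

Lemma ym_sym N (m : msg_vec N) (k l : 'I_N) : k != l -> ym m k l = ym m l k.
Proof.
rewrite /ym => hkl; case: ltngtP => // h.
by move/val_inj: h => h; rewrite h eqxx in hkl.
Qed.

Lemma Tb_sym N (m : msg_vec N) (k l : 'I_N) (i : 'I_(2 ^ N)) : k != l -> Tb m k l i = Tb m l k i.
Proof. by move=> h; rewrite /Tb ym_sym // [qbit i k (+) _]addbC. Qed.

Lemma Mx_sym N (m : msg_vec N) (k l : 'I_N) (i j : 'I_(2 ^ N)) : Mx m k l i j = Mx m k l j i.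
Proof. by rewrite /Mx agr_sym -andbA [Tb _ _ _ i && _]andbC andbA. Qed.

Lemma Mx_symkl N (m : msg_vec N) (k l : 'I_N) (i j : 'I_(2 ^ N)) : k != l -> Mx m k l i j = Mx m l k i j.
Proof. by move=> h; rewrite /Mx agr_symkl !(Tb_sym m _ h). Qed.

Lemma norm_pair N (m : msg_vec N) (k l : 'I_N) (i j : 'I_(2 ^ N)) : (k < l)%N ->
  `|pair_op (bellproj (m k l).1 (m k l).2) k l i j| = Mx m k l i j / 2%:R.
Proof.
move=> hkl; rewrite mxE normrM norm_bellproj !bsupp_idx2 /Mx /Tb /ym hkl.
rewrite -/(agr k l i j); case: (agr k l i j); rewrite ?normr1 ?normr0 //=.
by rewrite mul1r.
by rewrite !mul0r.
Qed.

Lemma pair_herm N (P : 'M[algC]_4) (k l : 'I_N) (i j : 'I_(2 ^ N)) :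
  (forall r c, P c r = (P r c)^*) ->
  pair_op P k l j i = (pair_op P k l i j)^*.
Proof.
move=> hP; rewrite !mxE rmorphM /= -hP.
rewrite -/(agr k l i j) -/(agr k l j i) agr_sym.
by case: (agr k l i j); rewrite ?conjC1 ?conjC0.
Qed.

Lemma sigma_herm N (m : msg_vec N) (i j : 'I_(2 ^ N)) :
  sigma_m m j i = (sigma_m m i j)^*.
Proof.
rewrite /sigma_m !summxE rmorph_sum; apply: eq_bigr => k _.
rewrite !summxE rmorph_sum; apply: eq_bigr => l _.
apply: pair_herm => r c; exact: bellproj_sym.
Qed.

Lemma norm_sigma N (m : msg_vec N) (i j : 'I_(2 ^ N)) :
  `|sigma_m m i j| <= \sum_(k < N) \sum_(l < N | (k < l)%N) Mx m k l i j / 2%:R.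
Proof.
rewrite /sigma_m summxE; apply: le_trans (ler_norm_sum _ _ _) _.
apply: ler_sum => k _; rewrite summxE; apply: le_trans (ler_norm_sum _ _ _) _.
by apply: ler_sum => l hl; rewrite norm_pair.
Qed.


Lemma uniq_bits N (m : msg_vec N) (k l : 'I_N) (i j : 'I_(2 ^ N)) :
  agr k l i j -> Tb m k l i -> Tb m k l j -> qbit j k = qbit i k -> i = j.
Proof.
move=> /forallP ha; rewrite /Tb => Ti Tj hk; apply: bits_inj => q.
case: (eqVneq q k) => [->|hqk]; first by rewrite hk.
case: (eqVneq q l) => [->|hql].
  move: Ti Tj; rewrite hk.
  by case: (qbit i k); case: (qbit i l); case: (qbit j l); case: (ym m k l).
by apply/eqP; have := ha q; rewrite hqk hql.
Qed.

Lemma flip_bits N (m : msg_vec N) (k l : 'I_N) (i j : 'I_(2 ^ N)) :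
  agr k l i j -> Tb m k l i -> Tb m k l j -> i != j ->
  qbit j k = ~~ qbit i k /\ qbit j l = ~~ qbit i l.
Proof.
move=> ha Ti Tj hij.
have hk : qbit j k != qbit i k.
  by apply/negP => /eqP e; rewrite (uniq_bits ha Ti Tj e) eqxx in hij.
move: Ti Tj hk; rewrite /Tb.
by case: (qbit i k); case: (qbit j k); case: (qbit i l); case: (qbit j l);
  case: (ym m k l).
Qed.

Lemma dk_pos N (m : msg_vec N) (k l : 'I_N) (i : 'I_(2 ^ N)) :
  l != k -> Tb m k l i -> (0 < dk m k i)%N.
Proof. by move=> hlk Ti; rewrite /dk (bigD1 l) //= Ti. Qed.

Lemma card_neq N (k : 'I_N) : (\sum_(l < N | l != k) 1 = N.-1)%N.
Proof.
have := sum1_card (predC1 k); rewrite cardC1 card_ord => <-.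
by [].
Qed.

Lemma flip_sum N (m : msg_vec N) (k l : 'I_N) (i j : 'I_(2 ^ N)) :
  k != l -> agr k l i j -> Tb m k l i -> Tb m k l j -> i != j ->
  (dk m k i + dk m k j = N)%N.
Proof.
move=> hkl ha Ti Tj hij; have [hk hl] := flip_bits ha Ti Tj hij.
rewrite /dk -big_split /=.
transitivity (\sum_(l' < N | l' != k) (1 + (l' == l)))%N.
  apply: eq_bigr => l' hl'.
  case: (eqVneq l' l) => [->|hne]; first by rewrite Ti Tj.
  have e : qbit j l' = qbit i l'.
    by apply/eqP; have := forallP ha l'; rewrite hl' hne /= eq_sym.
  rewrite /Tb hk e !addNb negbK.
  by case: (qbit i k (+) qbit i l' (+) ym m k l').
rewrite big_split /= card_neq (bigD1 l) /=; last by rewrite eq_sym.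
rewrite eqxx big1 => [|l' /andP [_ /negbTE ->]] //.
rewrite addn0 addn1 prednK //.
exact: (leq_ltn_trans (leq0n _) (ltn_ord k)).
Qed.


Lemma amgm2 (di dj x y : algC) : 0 < di -> 0 < dj -> 0 <= x -> 0 <= y ->
  x * y <= (dj / di * x ^+ 2 + di / dj * y ^+ 2) / 2%:R.
Proof.
move=> hi hj hx hy.
have hp : 0 < 2%:R * di * dj by rewrite !mulr_gt0 // ltr0n.
rewrite -(ler_pM2r hp) /=.
have di0 : di != 0 by rewrite gt_eqF.
have dj0 : dj != 0 by rewrite gt_eqF.
have -> : (dj / di * x ^+ 2 + di / dj * y ^+ 2) / 2%:R * (2%:R * di * dj)
   = dj ^+ 2 * x ^+ 2 + di ^+ 2 * y ^+ 2.
  by field; rewrite dj0 di0.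
have -> : x * y * (2%:R * di * dj) = 2%:R * (di * dj) * (x * y) by ring.
apply: amgm; [exact: ger0_real | exact: ger0_real | exact: gtr0_real | exact: gtr0_real].
Qed.

Lemma count_le1 N (m : msg_vec N) (k l : 'I_N) (i : 'I_(2 ^ N)) :
  Tb m k l i -> \sum_(j | j != i) Mx m k l i j <= 1.
Proof.
move=> Ti.
case: (boolP [exists j, (j != i) && (agr k l i j && Tb m k l j)]).
  move/existsP => [j0 /andP [hj0 /andP [ha0 T0]]].
  rewrite (bigD1 j0) //= big1 => [|j /andP [hji hjj0]].
    by rewrite /Mx ha0 Ti T0 addr0.
  rewrite /Mx; case h: (agr k l i j && Tb m k l i && Tb m k l j) => //.
  move/andP: h => [/andP [ha _] Tj].
  have hi0 : i != j0 by rewrite eq_sym.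
  have hij : i != j by rewrite eq_sym.
  have [hk0 _] := flip_bits ha0 Ti T0 hi0.
  have [hk _] := flip_bits ha Ti Tj hij.
  have e := uniq_bits (agr_trans ha0 ha) T0 Tj (etrans hk (esym hk0)).
  by rewrite e eqxx in hjj0.
move/existsPn => hn; rewrite big1 ?ler01 // => j hj.
move: (hn j); rewrite /Mx hj Ti /=.
by case: (agr k l i j); case: (Tb m k l j).
Qed.

Lemma dk_le N (m : msg_vec N) (k : 'I_N) (i : 'I_(2 ^ N)) : (dk m k i <= N)%N.
Proof.
rewrite /dk; apply: (@leq_trans (\sum_(l < N | l != k) 1)%N).
  by apply: leq_sum => l _; exact: leq_b1.
by rewrite card_neq leq_pred.
Qed.

Lemma row_bound N (m : msg_vec N) (k l : 'I_N) (i : 'I_(2 ^ N)) : k != l ->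
  \sum_j Mx m k l i j * ((dk m k j)%:R / (dk m k i)%:R)
    <= (Tb m k l i)%:R * (N%:R / (dk m k i)%:R).
Proof.
move=> hkl; case Ti: (Tb m k l i); last first.
  rewrite mul0r big1 // => j _; by rewrite /Mx Ti andbF andFb mul0r.
set d := dk m k i.
have dpos : (0 < d)%N by apply: (@dk_pos _ m k l); rewrite // eq_sym.
have d0 : (d%:R : algC) != 0 by rewrite pnatr_eq0 -lt0n.
rewrite mul1r (bigD1 i) //=.
have -> : Mx m k l i i = 1 by rewrite /Mx agr_refl Ti.
rewrite mul1r divff //.
have E : forall j, j != i -> Mx m k l i j * ((dk m k j)%:R / d%:R)
    = Mx m k l i j * ((N%:R - d%:R) / d%:R).
  move=> j hj; rewrite /Mx.
  case h: (agr k l i j && Tb m k l i && Tb m k l j); last by rewrite !mul0r.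
  move/andP: h => [/andP [ha _] Tj].
  have hij : i != j by rewrite eq_sym.
  have hs := flip_sum hkl ha Ti Tj hij.
  have -> : (N%:R : algC) = d%:R + (dk m k j)%:R by rewrite -natrD hs.
  by rewrite (addrC (d%:R)) addrK.
rewrite (eq_bigr _ E) -mulr_suml.
have hS := count_le1 Ti.
have hnd : 0 <= (N%:R - d%:R) / (d%:R : algC).
  by rewrite divr_ge0 // ?ler0n // subr_ge0 ler_nat dk_le.
apply: (@le_trans _ _ (1 + 1 * ((N%:R - d%:R) / d%:R))).
  by rewrite lerD2l ler_wpM2r.
by rewrite mul1r mulrBl divff // addrC subrK.
Qed.

Lemma star N (m : msg_vec N) (k l : 'I_N) (u : 'I_(2 ^ N) -> algC) :
  k != l -> (forall i, 0 <= u i) ->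
  \sum_i \sum_j Mx m k l i j * (u i * u j)
    <= \sum_i u i ^+ 2 * ((Tb m k l i)%:R * (N%:R / (dk m k i)%:R)).
Proof.
move=> hkl hu.
pose rho i j : algC := (dk m k j)%:R / (dk m k i)%:R.
have pt : forall i j, Mx m k l i j * (u i * u j) <=
   (Mx m k l i j * rho i j * u i ^+ 2 + Mx m k l i j * rho j i * u j ^+ 2) / 2%:R.
  move=> i j; rewrite /Mx.
  case h: (agr k l i j && Tb m k l i && Tb m k l j); last first.
    by rewrite !mul0r add0r mul0r.
  move/andP: h => [/andP [ha Ti] Tj]; rewrite !mul1r /rho.
  have lk : l != k by rewrite eq_sym.
  apply: amgm2 => //; rewrite ltr0n; exact: (dk_pos lk).
apply: (@le_trans _ _ (\sum_i \sum_j (Mx m k l i j * rho i j * u i ^+ 2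
     + Mx m k l i j * rho j i * u j ^+ 2) / 2%:R)).
  by apply: ler_sum => i _; apply: ler_sum => j _; exact: pt.
have eAB : \sum_i \sum_j Mx m k l i j * rho j i * u j ^+ 2
    = \sum_i \sum_j Mx m k l i j * rho i j * u i ^+ 2.
  rewrite exchange_big; apply: eq_bigr => i _; apply: eq_bigr => j _.
  by rewrite Mx_sym.
have -> : \sum_i \sum_j (Mx m k l i j * rho i j * u i ^+ 2
     + Mx m k l i j * rho j i * u j ^+ 2) / 2%:R
   = \sum_i \sum_j Mx m k l i j * rho i j * u i ^+ 2.
  under eq_bigr => i _ do rewrite -mulr_suml big_split /=.
  rewrite -mulr_suml big_split /= eAB.
  by field.
apply: ler_sum => i _.
rewrite -(eq_bigr _ (fun j _ => mulrC (u i ^+ 2) _)) -mulr_sumr.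
rewrite ler_wpM2l ?exprn_ge0 //.
exact: row_bound.
Qed.


Lemma reorg N (F : 'I_N -> 'I_N -> algC) :
  \sum_(k < N) \sum_(l < N | (k < l)%N) (F k l + F l k)
  = \sum_(k < N) \sum_(l < N | l != k) F k l.
Proof.
have E1 : \sum_(k < N) \sum_(l < N | (k < l)%N) (F k l + F l k)
  = \sum_(k < N) \sum_(l < N) (if (k < l)%N then F k l else 0)
    + \sum_(k < N) \sum_(l < N) (if (k < l)%N then F l k else 0).
  rewrite -big_split; apply: eq_bigr => k _; rewrite -big_split big_mkcond.
  by apply: eq_bigr => l _ /=; case: ifP; rewrite ?addr0.
have E2 : \sum_(k < N) \sum_(l < N) (if (k < l)%N then F l k else 0)
  = \sum_(k < N) \sum_(l < N) (if (l < k)%N then F k l else 0).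
  by rewrite exchange_big.
rewrite E1 E2 -big_split; apply: eq_bigr => k _.
rewrite -big_split [RHS]big_mkcond; apply: eq_bigr => l _ /=.
case: ltngtP => h.
- have hne : l != k by apply/eqP => e; rewrite e ltnn in h.
  by rewrite hne addr0.
- have hne : l != k by apply/eqP => e; rewrite e ltnn in h.
  by rewrite hne add0r.
- by rewrite (val_inj h) eqxx addr0.
Qed.

Definition Fk N (m : msg_vec N) (k l : 'I_N) (i : 'I_(2 ^ N)) : algC :=
  (Tb m k l i)%:R * (N%:R / (dk m k i)%:R).

Lemma pair_bound N (m : msg_vec N) (k l : 'I_N) (u : 'I_(2 ^ N) -> algC) :
  (k < l)%N -> (forall i, 0 <= u i) ->
  (\sum_i \sum_j Mx m k l i j * (u i * u j)) / 2%:R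
    <= (\sum_i u i ^+ 2 * (Fk m k l i + Fk m l k i)) / 4%:R.
Proof.
move=> hkl hu.
have hne : k != l by apply/eqP => e; rewrite e ltnn in hkl.
have hne' : l != k by rewrite eq_sym.
have h1 := star m hne hu.
have h2 := star m hne' hu.
have e : \sum_i \sum_j Mx m l k i j * (u i * u j)
       = \sum_i \sum_j Mx m k l i j * (u i * u j).
  by apply: eq_bigr => i _; apply: eq_bigr => j _; rewrite (Mx_symkl _ _ _ hne).
rewrite e in h2.
set X := \sum_i \sum_j Mx m k l i j * (u i * u j).
have -> : X / 2%:R = (X + X) / 4%:R by field.
have -> : \sum_i u i ^+ 2 * (Fk m k l i + Fk m l k i)
   = \sum_i u i ^+ 2 * Fk m k l i + \sum_i u i ^+ 2 * Fk m l k i.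
  by rewrite -big_split; apply: eq_bigr => i _; rewrite mulrDr.
rewrite ler_wpM2r ?invr_ge0 ?ler0n //.
exact: lerD.
Qed.

Lemma main_bound N (m : msg_vec N) (u : 'I_(2 ^ N) -> algC) :
  (forall i, 0 <= u i) ->
  \sum_i \sum_j u i * u j * (\sum_(k < N) \sum_(l < N | (k < l)%N) Mx m k l i j / 2%:R)
   <= \sum_i u i ^+ 2 * ((\sum_(k < N) (dk m k i)%:R * (N%:R / (dk m k i)%:R)) / 4%:R).
Proof.
move=> hu.
have E : \sum_i \sum_j u i * u j * (\sum_(k < N) \sum_(l < N | (k < l)%N) Mx m k l i j / 2%:R)
   = \sum_(k < N) \sum_(l < N | (k < l)%N)
        (\sum_i \sum_j Mx m k l i j * (u i * u j)) / 2%:R.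
  transitivity (\sum_i \sum_j \sum_(k < N) \sum_(l < N | (k < l)%N)
                  Mx m k l i j * (u i * u j) / 2%:R).
    apply: eq_bigr => i _; apply: eq_bigr => j _; rewrite mulr_sumr.
    apply: eq_bigr => k _; rewrite mulr_sumr; apply: eq_bigr => l _.
    by rewrite mulrA [u i * u j * _]mulrC.
  under eq_bigr => i _ do rewrite exchange_big.
  rewrite exchange_big; apply: eq_bigr => k _.
  under eq_bigr => i _ do rewrite exchange_big.
  rewrite exchange_big; apply: eq_bigr => l _.
  rewrite mulr_suml; apply: eq_bigr => i _; by rewrite mulr_suml.
rewrite E.
apply: (@le_trans _ _ (\sum_(k < N) \sum_(l < N | (k < l)%N)
     (\sum_i u i ^+ 2 * (Fk m k l i + Fk m l k i)) / 4%:R)).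
  by apply: ler_sum => k _; apply: ler_sum => l hl; exact: pair_bound.
rewrite le_eqVlt; apply/orP; left; apply/eqP.
transitivity (\sum_i u i ^+ 2 *
   ((\sum_(k < N) \sum_(l < N | (k < l)%N) (Fk m k l i + Fk m l k i)) / 4%:R)).
  under eq_bigr => k _ do under eq_bigr => l _ do rewrite mulr_suml.
  under eq_bigr => k _ do rewrite exchange_big.
  rewrite exchange_big; apply: eq_bigr => i _.
  rewrite mulr_suml mulr_sumr; apply: eq_bigr => k _.
  rewrite mulr_suml mulr_sumr; apply: eq_bigr => l _.
  by rewrite mulrA.
apply: eq_bigr => i _; congr (_ * (_ / _)).
have := reorg (fun k l => Fk m k l i) => /= ->.
apply: eq_bigr => k _.
by rewrite /Fk -mulr_suml -natr_sum.
Qed.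


Lemma coef N (hN : (0 < N)%N) (m : msg_vec N) (i : 'I_(2 ^ N)) :
  (\sum_(k < N) (dk m k i)%:R * (N%:R / (dk m k i)%:R)) / 4%:R
   <= (N%:R ^+ 2) / 4%:R + N%:R / 4%:R - 1 / 2%:R :> algC.
Proof.
move: hN m i; case: N => [//|[|n]] _ m i.
  rewrite big1 => [|k _]; last first.
    by rewrite /dk big1 ?mul0r // => l; rewrite (ord1 l) (ord1 k) eqxx.
  have -> : (1%:R ^+ 2) / 4%:R + 1%:R / 4%:R - 1 / 2%:R = 0 :> algC by field.
  by rewrite mul0r.
apply: (@le_trans _ _ ((n.+2)%:R * (n.+2)%:R / 4%:R)).
  rewrite ler_wpM2r ?invr_ge0 ?ler0n //.
  apply: (@le_trans _ _ (\sum_(k < n.+2) (n.+2)%:R)).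
    apply: ler_sum => k _.
    case: (eqVneq (dk m k i) 0%N) => [->|hd]; first by rewrite mul0r ler0n.
    by rewrite mulrCA divff ?mulr1 // pnatr_eq0.
  by rewrite sumr_const card_ord mulr_natr.
rewrite -subr_ge0.
have -> : (n.+2)%:R ^+ 2 / 4%:R + (n.+2)%:R / 4%:R - 1 / 2%:R
    - (n.+2)%:R * (n.+2)%:R / 4%:R = n%:R / 4%:R :> algC.
  by rewrite -addn2 natrD; field.
by apply: divr_ge0; rewrite ler0n.
Qed.

Unset Implicit Arguments. Set Strict Implicit.

Theorem lemma3 (N : nat) (hN : (0 < N)%N) (m : msg_vec N) (a : algC) :
  eigenvalue (sigma_m m) a ->
  a <= (N%:R ^+ 2) / 4%:R + N%:R / 4%:R - 1 / 2%:R.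
Proof.
move=> /eigenvalueP [v hv v0].
set s := sigma_m m.
set B := (N%:R ^+ 2) / 4%:R + N%:R / 4%:R - 1 / 2%:R.
pose u i := `|v 0 i|.
pose q := \sum_j (\sum_i v 0 i * s i j) * (v 0 j)^*.
pose nv := \sum_j u j ^+ 2.
have hq : q = a * nv.
  rewrite /q /nv mulr_sumr; apply: eq_bigr => j _.
  have : (v *m s) 0 j = (a *: v) 0 j by rewrite hv.
  rewrite !mxE => ->.
  by rewrite /u normCK mulrA.
have qreal : q \is Num.real.
  rewrite CrealE; apply/eqP.
  transitivity (\sum_j \sum_i v 0 j * s j i * (v 0 i)^*).
    rewrite rmorph_sum; apply: eq_bigr => j _.
    rewrite rmorphM /=.
    rewrite (conjCK (v 0 j)).
    rewrite rmorph_sum mulr_suml; apply: eq_bigr => i _ /=.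
    rewrite rmorphM /= /s -sigma_herm.
    by ring.
  by rewrite exchange_big /q; apply: eq_bigr => i _; rewrite mulr_suml.
have [j0 hj0] : exists j, v 0 j != 0.
  case: (pickP (fun j => v 0 j != 0)) => [j hj|hn]; first by exists j.
  exfalso; move/negP: v0; apply; apply/eqP/matrixP => r c.
  by rewrite (ord1 r) mxE; move: (hn c) => /= /negbFE /eqP.
have hu : forall i, 0 <= u i by move=> i; exact: normr_ge0.
have nvpos : 0 < nv.
  rewrite /nv (bigD1 j0) //=.
  apply: (@lt_le_trans _ _ (u j0 ^+ 2)).
    by rewrite exprn_gt0 // normr_gt0.
  by rewrite lerDl sumr_ge0 // => i _; rewrite exprn_ge0.
have hbound : q <= B * nv.
  apply: le_trans (real_ler_norm qreal) _.
  apply: (@le_trans _ _ (\sum_j \sum_i u j * u i *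
      (\sum_(k < N) \sum_(l < N | (k < l)%N) Mx m k l i j / 2%:R))).
    rewrite /q; apply: le_trans (ler_norm_sum _ _ _) _.
    apply: ler_sum => j _; rewrite normrM norm_conjC -/(u j).
    apply: (le_trans (ler_wpM2r (hu j) (ler_norm_sum _ _ _))).
    rewrite mulr_suml; apply: ler_sum => i _.
    rewrite normrM -/(u i).
    have := norm_sigma m i j; rewrite -/s => hs.
    rewrite [u j * u i]mulrC mulrAC.
    by rewrite ler_wpM2l // mulr_ge0.
  under eq_bigr => j _ do under eq_bigr => i _ do
    under eq_bigr => k _ do under eq_bigr => l _ do rewrite Mx_sym.
  apply: le_trans (main_bound m hu) _.
  rewrite /nv mulr_sumr; apply: ler_sum => i _.
  rewrite mulrC ler_wpM2r ?exprn_ge0 //.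
  exact: coef.
have -> : a = q / nv by rewrite hq mulfK // gt_eqF.
by rewrite ler_pdivrMr.
Qed.
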